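(* Let $m\ge 1$ be fixed and let $\boldsymbol{\beta}\in\mathbb{R}^m$ be a fixed vector. For each $p$, let $A=A_p\in\mathbb{R}^{m\times p}$ and let $\Psi=\Psi_p\in\mathbb{R}^{p\times p}$ be symmetric positive definite, where as $p$ grows new columns are appended to $A$ and new rows and columns are appended to $\Psi$. Assume: (A.1) there are constants $0<k\le K<\infty$ such that all eigenvalues of $\Psi_p$ lie in $[k,K]$ for all $p$; (A.2) the limit $\lim_{p\to\infty}\frac{1}{p}A_pA_p^T\in\mathbb{R}^{m\times m}$ exists and has full rank $m$. Define $\boldsymbol{\gamma}_0=\boldsymbol{\gamma}_0(p)=(A_p^TA_p+\Psi_p)^{-1}A_p^T\boldsymbol{\beta}\in\mathbb{R}^p$. Then $\|\boldsymbol{\gamma}_0\|_1=\mathcal{O}(1)$ as $p\to\infty$.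
   Context: This arises from the joint latent variable model $y=\boldsymbol{\beta}^T\mathbf{f}+\epsilon$, $\mathbf{x}=A^T\mathbf{f}+\mathbf{e}$, with latent $\mathbf{f}\in\mathbb{R}^m$ (mean zero, identity covariance), $\epsilon$ mean zero with variance $\sigma^2$, $\mathbf{e}$ mean zero with covariance $\Psi$, all mutually uncorrelated; then $\boldsymbol{\gamma}_0^T\mathbf{x}$ is the best linear predictor of $y$ from $\mathbf{x}\in\mathbb{R}^p$. $\|\cdot\|_1$ denotes the $\ell_1$-norm. *)

(* Defs.v *)
From HB Require Import structures.
From mathcomp Require Import all_boot all_order all_algebra.
From mathcomp Require Import all_classical all_reals all_analysis.
Set Implicit Arguments. Unset Strict Implicit. Unset Printing Implicit Defensive.
Import Order.TTheory GRing.Theory Num.Theory.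
Local Open Scope ring_scope.

Definition sym_pd (R : realType) (n : nat) (M : 'M[R]_n) : Prop :=
  M^T = M /\ forall v : 'cV[R]_n, v != 0 -> 0 < (v^T *m M *m v) 0 0.

(* All (real) eigenvalues of M lie in [k, K]. For symmetric real matrices all
   eigenvalues are real, so this is the paper's condition. *)
Definition eigs_in (R : realType) (n : nat) (M : 'M[R]_n) (k K : R) : Prop :=
  forall a : R, eigenvalue M a -> k <= a <= K.

Definition drop_last_col (R : Type) (m p : nat) (B : 'M[R]_(m, p.+1)) : 'M[R]_(m, p) :=
  \matrix_(i < m, j < p) B i (widen_ord (leqnSn p) j).
Definition lead_block (R : Type) (p : nat) (B : 'M[R]_p.+1) : 'M[R]_p :=
  \matrix_(i < p, j < p) B (widen_ord (leqnSn p) i) (widen_ord (leqnSn p) j).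

Definition gamma0 (R : realType) (m p : nat) (A : 'M[R]_(m, p)) (Psi : 'M[R]_p)
  (beta : 'cV[R]_m) : 'cV[R]_p :=
  invmx (A^T *m A + Psi) *m (A^T *m beta).

Definition l1norm (R : realType) (p : nat) (v : 'cV[R]_p) : R :=
  \sum_(i < p) `|v i 0|.

(* Main.v *)
Require Import Defs.
From HB Require Import structures.
From mathcomp Require Import all_boot all_order all_algebra.
From mathcomp Require Import all_classical all_reals all_analysis.
From mathcomp Require Import ring lra.
Set Implicit Arguments. Unset Strict Implicit. Unset Printing Implicit Defensive.
Import Order.TTheory GRing.Theory Num.Theory.
Import numFieldNormedType.Exports.
Local Open Scope classical_set_scope.
Local Open Scope ring_scope.

Section H.
Variable R : realType.

Definition bf n (M : 'M[R]_n) (u v : 'cV[R]_n) : R := (u^T *m M *m v) 0 0.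
Definition nsq n (v : 'cV[R]_n) : R := (v^T *m v) 0 0.
Definition Sabs n (X : 'M[R]_n) : R := \sum_i \sum_j `|X i j|.

Lemma bf_sum n (M : 'M[R]_n) u v : bf M u v = \sum_i \sum_j u i 0 * M i j * v j 0.
Proof.
rewrite /bf !mxE; under eq_bigr => j _ do rewrite !mxE mulr_suml.
rewrite exchange_big /=; apply: eq_bigr => i _; apply: eq_bigr => j _.
by rewrite mxE.
Qed.

Lemma nsq_sum n (v : 'cV[R]_n) : nsq v = \sum_i v i 0 ^+ 2.
Proof. by rewrite /nsq mxE; apply: eq_bigr => i _; rewrite mxE expr2. Qed.

Lemma nsq_ge0 n (v : 'cV[R]_n) : 0 <= nsq v.
Proof. by rewrite nsq_sum; apply: sumr_ge0 => i _; rewrite sqr_ge0. Qed.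

Lemma sq_le_nsq n (v : 'cV[R]_n) i : v i 0 ^+ 2 <= nsq v.
Proof.
by rewrite nsq_sum (bigD1 i) //= lerDl; apply: sumr_ge0 => j _; rewrite sqr_ge0.
Qed.

Lemma nsq_gt0 n (v : 'cV[R]_n) : v != 0 -> 0 < nsq v.
Proof.
move=> vn0; have [i vi] : exists i, v i 0 != 0.
  apply/existsP; apply: contraNT vn0; rewrite negb_exists => /forallP H.
  apply/eqP/matrixP => i j; rewrite (ord1 j) mxE; exact/eqP/negPn/H.
by apply: lt_le_trans (sq_le_nsq v i); rewrite exprn_even_gt0 // vi orbT.
Qed.

Lemma bfC n (M : 'M[R]_n) u v : M^T = M -> bf M u v = bf M v u.
Proof.
move=> sM; rewrite !bf_sum exchange_big; apply: eq_bigr => i _; apply: eq_bigr => j _.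
by rewrite -{1}sM mxE; ring.
Qed.

Lemma bfDl n (M : 'M[R]_n) u w v : bf M (u + w) v = bf M u v + bf M w v.
Proof. by rewrite /bf linearD /= !mulmxDl mxE. Qed.
Lemma bfDr n (M : 'M[R]_n) u w v : bf M v (u + w) = bf M v u + bf M v w.
Proof. by rewrite /bf !mulmxDr mxE. Qed.
Lemma bfZl n (M : 'M[R]_n) t u v : bf M (t *: u) v = t * bf M u v.
Proof. by rewrite /bf linearZ /= -!scalemxAl mxE. Qed.
Lemma bfZr n (M : 'M[R]_n) t u v : bf M u (t *: v) = t * bf M u v.
Proof. by rewrite /bf -!scalemxAr mxE. Qed.

Lemma bf_expand n (M : 'M[R]_n) u v t : M^T = M ->
  bf M (u + t *: v) (u + t *: v) = bf M u u + 2 * t * bf M u v + t ^+ 2 * bf M v v.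
Proof.
move=> sM; rewrite !bfDl !bfDr !bfZl !bfZr (@bfC _ M v u) //; ring.
Qed.

Lemma quad_disc (a b c : R) : 0 <= c -> (forall t, 0 <= a + 2 * t * b + t ^+ 2 * c) ->
  b ^+ 2 <= a * c.
Proof.
move=> c0 H; have [cz|cp] := eqVneq c 0.
  have [bz|bn] := eqVneq b 0; first by rewrite bz cz; lra.
  have := H (- (a + 1) / (2 * b)); rewrite cz; set t := _ / _.
  have -> : 2 * t * b = - (a + 1).
    by rewrite /t; field.
  rewrite mulr0 mulr0; lra.
have := H (- b / c).
have -> : a + 2 * (- b / c) * b + (- b / c) ^+ 2 * c = (a * c - b ^+ 2) / c.
  by field.
move=> h; rewrite -subr_ge0.
have -> : a * c - b ^+ 2 = ((a * c - b ^+ 2) / c) * c by field.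
exact: mulr_ge0 h c0.
Qed.


Lemma Sabs_ge0 n (X : 'M[R]_n) : 0 <= Sabs X.
Proof. by apply: sumr_ge0 => i _; apply: sumr_ge0 => j _. Qed.

Lemma absmul_le_nsq n (v : 'cV[R]_n) i j : `|v i 0| * `|v j 0| <= nsq v.
Proof.
have h1 := sq_le_nsq v i; have h2 := sq_le_nsq v j.
have : 0 <= (`|v i 0| - `|v j 0|) ^+ 2 by apply: sqr_ge0.
rewrite -(real_normK (num_real (v i 0))) -(real_normK (num_real (v j 0))) in h1 h2.
lra.
Qed.

Lemma bf_abs n (M : 'M[R]_n) v : `|bf M v v| <= Sabs M * nsq v.
Proof.
rewrite bf_sum /Sabs mulr_suml; apply: le_trans (ler_norm_sum _ _ _) _.
apply: ler_sum => i _; rewrite mulr_suml; apply: le_trans (ler_norm_sum _ _ _) _.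
apply: ler_sum => j _; rewrite !normrM.
have := absmul_le_nsq v i j; have := normr_ge0 (M i j).
have := normr_ge0 (v i 0); have := normr_ge0 (v j 0); nra.
Qed.

Lemma CS n (M : 'M[R]_n) u v : M^T = M -> (forall x, 0 <= bf M x x) ->
  bf M u v ^+ 2 <= bf M u u * bf M v v.
Proof.
move=> sM psd; apply: quad_disc => // t; rewrite -bf_expand //.
Qed.

Lemma nsq_bf1 n (v : 'cV[R]_n) : nsq v = bf 1%:M v v.
Proof. by rewrite /nsq /bf mulmx1. Qed.

Lemma bf_trmul n (X : 'M[R]_n) u : bf (X^T *m X) u u = nsq (X *m u).
Proof. by rewrite /bf /nsq trmx_mul !mulmxA. Qed.

Lemma nsq_mul_le n (X : 'M[R]_n) u : nsq (X *m u) <= Sabs (X^T *m X) * nsq u.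
Proof. by rewrite -bf_trmul; apply: le_trans (ler_norm _) (bf_abs _ _). Qed.


Lemma bfBM n (M N : 'M[R]_n) u v : bf (M - N) u v = bf M u v - bf N u v.
Proof. by rewrite /bf mulmxBr mulmxBl !mxE. Qed.


Lemma bf_scal n (a : R) (v : 'cV[R]_n) : bf a%:M v v = a * nsq v.
Proof. by rewrite /bf /nsq mul_mx_scalar -scalemxAl mxE. Qed.

Lemma bf0 n (M : 'M[R]_n) : bf M 0 0 = 0.
Proof. by rewrite /bf mulmx0 mxE. Qed.

Lemma nsq0 n : nsq (0 : 'cV[R]_n) = 0.
Proof. by rewrite /nsq mulmx0 mxE. Qed.

Lemma not_eig_unit n (M : 'M[R]_n) a : ~~ eigenvalue M a -> (M - a%:M) \in unitmx.
Proof. by rewrite /eigenvalue /eigenspace negbK kermx_eq0 row_free_unit. Qed.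

Definition rayset n (M : 'M[R]_n) : set R :=
  [set bf M v v / nsq v | v in [set v : 'cV[R]_n | v != 0]].

Lemma rayset_lb n (M : 'M[R]_n) : lbound (rayset M) (- Sabs M).
Proof.
move=> x [v /= vn0 <-]; have hp := nsq_gt0 vn0.
rewrite ler_pdivlMr // mulNr lerNl; apply: le_trans (bf_abs M v).
by rewrite -normrN ler_norm.
Qed.

Lemma rayleigh_a n (M : 'M[R]_n) v : inf (rayset M) * nsq v <= bf M v v.
Proof.
have [->|vn0] := eqVneq v 0; first by rewrite nsq0 bf0 mulr0.
have hp := nsq_gt0 vn0; rewrite -ler_pdivlMr //.
apply: ge_inf; first by exists (- Sabs M); apply: rayset_lb.
by exists v.
Qed.

Lemma rayleigh_b n (M : 'M[R]_n) : M^T = M -> (0 < n)%N -> eigenvalue M (inf (rayset M)).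
Proof.
move=> sM n0; set mu := inf (rayset M); case: (boolP (eigenvalue M mu)) => // /not_eig_unit Mu; exfalso.
set M' := M - mu%:M.
have sM' : M'^T = M' by rewrite /M' linearB /= tr_scalar_mx sM.
have bfM' v : bf M' v v = bf M v v - mu * nsq v by rewrite bfBM bf_scal.
have psd v : 0 <= bf M' v v by rewrite bfM' subr_ge0; apply: rayleigh_a.
set N := invmx M'; set G := Sabs (N^T *m N); set S := Sabs M'.
have G0 : 0 <= G by apply: Sabs_ge0.
have S0 : 0 <= S by apply: Sabs_ge0.
set eps := (G * S + 1)^-1.
have eps0 : 0 < eps by rewrite invr_gt0; have := mulr_ge0 G0 S0; lra.
have Geps : G * S * eps < 1.
  have hpos : 0 < G * S + 1 by have := mulr_ge0 G0 S0; lra.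
  rewrite /eps ltr_pdivrMr // mul1r; lra.
have ne : nonempty (rayset M).
  have h1 : (const_mx 1 : 'cV[R]_n) != 0.
    apply/eqP => /matrixP /(_ (Ordinal n0) 0); rewrite !mxE; apply/eqP; exact: oner_neq0.
  set c1 : 'cV[R]_n := const_mx 1 in h1 *.
  by exists (bf M c1 c1 / nsq c1), c1.
have [e [v /= vn0 <-] hlt] := inf_adherent eps0 (conj ne (ex_intro _ _ (@rayset_lb _ M))).
have hp := nsq_gt0 vn0.
have h1 : bf M' v v < eps * nsq v.
  by rewrite bfM' ltrBlDl -mulrDl -ltr_pdivrMr.
set u := M' *m v.
have hu : bf M' u v = nsq u by rewrite /bf /nsq -mulmxA.
have hcs := CS u v sM' psd; rewrite hu in hcs.
have hu2 : bf M' u u <= S * nsq u by apply: le_trans (ler_norm _) (bf_abs _ _).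
have hnu : nsq u <= S * bf M' v v.
  have [z|nz] := eqVneq (nsq u) 0; first by rewrite z; apply: mulr_ge0.
  have pu : 0 < nsq u by rewrite lt_neqAle eq_sym nz nsq_ge0.
  have h3 : nsq u * nsq u <= nsq u * (S * bf M' v v).
    apply: le_trans (_ : bf M' u u * bf M' v v <= _); first by rewrite -expr2.
    rewrite mulrA ler_wpM2r // ?psd // mulrC //.
  by rewrite -(ler_pM2l pu).
have hv : nsq v <= G * nsq u.
  have -> : v = N *m u by rewrite /u /N mulKmx.
  exact: nsq_mul_le.
have GS0 := mulr_ge0 G0 S0.
have k1 : G * nsq u <= G * S * bf M' v v by rewrite -mulrA ler_wpM2l.
have k2 : G * S * bf M' v v <= G * S * eps * nsq v.
  by rewrite -(mulrA (G * S)) ler_wpM2l // ltW.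
have k3 : G * S * eps * nsq v < 1 * nsq v by rewrite ltr_pM2r.
move: k1 k2 k3 hv; clear; lra.
Qed.


Lemma cV0 (v : 'cV[R]_0) : v = 0.
Proof. exact: flatmx0. Qed.

Lemma eig_lower n (M : 'M[R]_n) k : M^T = M -> (forall a, eigenvalue M a -> k <= a) ->
  forall v, k * nsq v <= bf M v v.
Proof.
move=> sM hk v; case: n M sM hk v => [|n] M sM hk v.
  by rewrite (cV0 v) nsq0 bf0 mulr0.
apply: le_trans (rayleigh_a M v); rewrite ler_wpM2r ?nsq_ge0 //.
exact/hk/rayleigh_b.
Qed.

Lemma bfNM n (M : 'M[R]_n) u v : bf (- M) u v = - bf M u v.
Proof. by rewrite /bf mulmxN mulNmx mxE. Qed.

Lemma eig_upper n (M : 'M[R]_n) K : M^T = M -> (forall a, eigenvalue M a -> a <= K) ->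
  forall v, bf M v v <= K * nsq v.
Proof.
move=> sM hK v; case: n M sM hK v => [|n] M sM hK v.
  by rewrite (cV0 v) nsq0 bf0 mulr0.
have sN : (- M)^T = - M by rewrite linearN /= sM.
have := rayleigh_a (- M) v; rewrite bfNM.
have /eigenvalueP [w hw wn0] := rayleigh_b sN (ltn0Sn n).
have : eigenvalue M (- inf (rayset (- M))).
  by apply/eigenvalueP; exists w => //; rewrite scaleNr -hw mulmxN opprK.
move=> /hK h1 h2; have := nsq_ge0 v => h3.
have : - inf (rayset (- M)) * nsq v <= K * nsq v by rewrite ler_wpM2r.
rewrite mulNr; lra.
Qed.

Lemma pd_unit n (M : 'M[R]_n) : (forall v, v != 0 -> 0 < bf M v v) -> M \in unitmx.
Proof.
move=> hpd; rewrite -row_free_unit -kermx_eq0; apply/negPn/negP.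
move=> /rowV0Pn [w /sub_kermxP hw wn0].
have : w^T != 0 by apply: contra wn0 => /eqP h; rewrite -[w]trmxK h linear0.
move=> /hpd; rewrite /bf trmxK hw mul0mx mxE ltxx //.
Qed.

Lemma bfDM n (M N : 'M[R]_n) u v : bf (M + N) u v = bf M u v + bf N u v.
Proof. by rewrite /bf mulmxDr mulmxDl !mxE. Qed.

Lemma bf_trmul' m n (X : 'M[R]_(m, n)) u : bf (X^T *m X) u u = nsq (X *m u).
Proof. by rewrite /bf /nsq trmx_mul !mulmxA. Qed.

Lemma ge0_eps (x C : R) : 0 <= C -> (forall d, 0 < d -> - (d * C) <= x) -> 0 <= x.
Proof.
move=> C0 h; rewrite leNgt; apply/negP => xn.
have hp : 0 < C + 1 by lra.
have := h (- x / (C + 1)); rewrite divr_gt0 ?oppr_gt0 // => /(_ isT).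
have -> : - (- x / (C + 1) * C) = x * C / (C + 1) by field; lra.
rewrite ler_pdivrMr //; nra.
Qed.

Lemma l1_bound n (x : 'cV[R]_n) : (0 < n)%N ->
  l1norm x <= (n%:R * nsq x + 1) / 2.
Proof.
move=> n0; have np : 0 < n%:R :> R by rewrite ltr0n.
have hi i : `|x i 0| <= (n%:R * x i 0 ^+ 2 + n%:R^-1) / 2.
  have := sqr_ge0 (n%:R * `|x i 0| - 1).
  rewrite -(real_normK (num_real (x i 0))).
  set a := `|x i 0|; set N := n%:R => h.
  have hN : N * N^-1 = 1 by rewrite mulfV // gt_eqF.
  rewrite ler_pdivlMr //.
  have : 0 <= N^-1 * (N * a - 1) ^+ 2 by rewrite mulr_ge0 // invr_ge0 ltW.
  have -> : N^-1 * (N * a - 1) ^+ 2 = N * a ^+ 2 - 2 * a + N^-1.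
    by field; rewrite gt_eqF.
  lra.
rewrite /l1norm; apply: le_trans (ler_sum _ (fun i _ => hi i)) _.
rewrite -mulr_suml big_split /= -mulr_sumr -nsq_sum sumr_const card_ord.
by rewrite -(mulr_natr (n%:R^-1)) mulVf ?gt_eqF.
Qed.


Lemma bfZM n (M : 'M[R]_n) a u v : bf (a *: M) u v = a * bf M u v.
Proof. by rewrite /bf -scalemxAr -scalemxAl mxE. Qed.

Lemma core (m p : nat) (A : 'M[R]_(m, p)) (Psi : 'M[R]_p) (beta : 'cV[R]_m) (k K c : R) :
  0 < k -> 0 < c -> (0 < p)%N -> Psi^T = Psi ->
  (forall v, k * nsq v <= bf Psi v v) -> (forall v, bf Psi v v <= K * nsq v) ->
  (forall v, c * nsq v <= bf (p%:R^-1 *: (A *m A^T)) v v) ->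
  l1norm (gamma0 A Psi beta) <= (K * nsq beta / (c * k) + 1) / 2.
Proof.
move=> k0 c0 p0 sP hk hK hc.
have P0 : 0 < p%:R :> R by rewrite ltr0n.
set H := A^T *m A + Psi.
have Hu : H \in unitmx.
  apply: pd_unit => v vn0; rewrite /H bfDM bf_trmul'.
  have := hk v; have := nsq_gt0 vn0; have := nsq_ge0 (A *m v) => h1 h2 h3.
  have : 0 < k * nsq v by rewrite mulr_gt0.
  lra.
set g := gamma0 A Psi beta.
have hg : H *m g = A^T *m beta by rewrite /g /gamma0 mulKVmx.
set Mp := p%:R^-1 *: (A *m A^T).
have Mu : Mp \in unitmx.
  apply: pd_unit => v vn0; apply: lt_le_trans (hc v).
  by rewrite mulr_gt0 // nsq_gt0.
set w := invmx Mp *m beta.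
have hw : Mp *m w = beta by rewrite /w mulKVmx.
set gs := p%:R^-1 *: (A^T *m w).
have hgs : A *m gs = beta.
  by rewrite /gs -scalemxAr mulmxA scalemxAl.
set d := gs - g.
have hpsi : Psi *m g = A^T *m A *m d.
  move: hg; rewrite /H mulmxDl -hgs mulmxA => hg.
  by rewrite /d mulmxBr -hg addrC addKr.
have egs : gs = g + 1 *: d by rewrite scale1r /d addrC subrK.
have opt : bf Psi g g <= bf Psi gs gs.
  rewrite egs bf_expand // (@bfC _ _ g d) //.
  have -> : bf Psi d g = nsq (A *m d) by rewrite /bf -mulmxA hpsi -bf_trmul' /bf !mulmxA.
  have := nsq_ge0 (A *m d); have := hk d; have := nsq_ge0 d => h1 h2 h3.
  have : 0 <= k * nsq d by rewrite mulr_ge0 // ltW.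
  rewrite expr1n mul1r; lra.
set t := bf 1%:M w beta.
have ht : bf Mp w w = t by rewrite /t /bf -mulmxA hw mulmx1.
have ngs : nsq gs = p%:R^-1 * t.
  rewrite -ht /Mp bfZM nsq_bf1 /gs bfZl bfZr -nsq_bf1.
  have -> : A *m A^T = (A^T)^T *m A^T by rewrite trmxK.
  by rewrite bf_trmul' mulrA.
have ct : c * t <= nsq beta.
  have h1 := nsq_ge0 (beta + (- c) *: w).
  rewrite nsq_bf1 bf_expand ?tr_scalar_mx // -!nsq_bf1 in h1.
  have e1 : bf 1%:M beta w = t by rewrite /t bfC ?tr_scalar_mx.
  rewrite e1 in h1.
  have h2 : c * nsq w <= t by rewrite -ht; apply: hc.
  have h3 : c * (c * nsq w) <= c * t by rewrite ler_wpM2l // ltW.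
  move: h1 h3; clear; rewrite sqrrN expr2 mulrA; lra.
have e1 : k * nsq g <= K * (p%:R^-1 * t).
  apply: le_trans (hk g) _; apply: le_trans opt _; rewrite -ngs; exact: hK.
have Kge : 0 <= K.
  have h1 : (const_mx 1 : 'cV[R]_p) != 0.
    apply/eqP => /matrixP /(_ (Ordinal p0) 0); rewrite !mxE; apply/eqP; exact: oner_neq0.
  have := le_trans (hk (const_mx 1)) (hK (const_mx 1)).
  rewrite ler_pM2r ?nsq_gt0 // => h; lra.
apply: le_trans (l1_bound g p0) _.
rewrite ler_pM2r // lerD2r.
have e2 : k * (p%:R * nsq g) <= K * t.
  have := ler_wpM2l (ltW P0) e1.
  have eq : p%:R * (K * (p%:R^-1 * t)) = K * t by field; rewrite gt_eqF.
  by rewrite eq mulrCA.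
have e3 : K * t <= K * (nsq beta / c).
  by rewrite ler_wpM2l // ler_pdivlMr // mulrC.
rewrite (_ : K * nsq beta / (c * k) = K * (nsq beta / c) / k); last first.
  by field; rewrite !gt_eqF.
rewrite ler_pdivlMr // mulrC; lra.
Qed.



Lemma mxBE n (X Y : 'M[R]_n) i j : (X - Y) i j = X i j - Y i j.
Proof. by rewrite !mxE. Qed.

Lemma rayset_ne n (M : 'M[R]_n) : (0 < n)%N -> nonempty (rayset M).
Proof.
move=> n0; have h1 : (const_mx 1 : 'cV[R]_n) != 0.
  apply/eqP => /matrixP /(_ (Ordinal n0) 0); rewrite !mxE; apply/eqP; exact: oner_neq0.
set c1 : 'cV[R]_n := const_mx 1 in h1 *.
by exists (bf M c1 c1 / nsq c1), c1.
Qed.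

Lemma eig0_not_unit n (M : 'M[R]_n) : eigenvalue M 0 -> ~~ (M \in unitmx).
Proof.
rewrite /eigenvalue /eigenspace kermx_eq0 row_free_unit.
suff -> : M - 0%:M = M by [].
by apply/matrixP => i j; rewrite !mxE mul0rn subr0.
Qed.

End H.

Unset Implicit Arguments. Set Strict Implicit. Set Printing Implicit Defensive.

Theorem proposition1 (R : realType) (m : nat) (hm : (0 < m)%N)
  (beta : 'cV[R]_m)
  (A : forall p : nat, 'M[R]_(m, p)) (Psi : forall p : nat, 'M[R]_p)
  (hAnest : forall p : nat, drop_last_col (A p.+1) = A p)
  (hPnest : forall p : nat, lead_block (Psi p.+1) = Psi p)
  (hPpd : forall p : nat, sym_pd (Psi p))
  (k K : R) (hk : 0 < k) (hkK : k <= K)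
  (hA1 : forall p : nat, eigs_in (Psi p) k K)
  (L : 'M[R]_m)
  (hA2lim : forall i j : 'I_m,
     ((fun p : nat => (p%:R)^-1 * (A p *m (A p)^T) i j) : R^nat) @ \oo --> (L i j : R))
  (hA2rank : \rank L = m) :
  exists C : R, exists N : nat, forall p : nat, (N <= p)%N ->
    l1norm (gamma0 (A p) (Psi p) beta) <= C.
Proof.
pose Mp p : 'M[R]_m := (p%:R^-1) *: (A p *m (A p)^T).
have Msym p : (Mp p)^T = Mp p by rewrite /Mp linearZ /= trmx_mul trmxK.
have Mpsd p v : 0 <= bf (Mp p) v v.
  rewrite /Mp bfZM; apply: mulr_ge0; first by rewrite invr_ge0 ler0n.
  have -> : A p *m (A p)^T = ((A p)^T)^T *m (A p)^T by rewrite trmxK.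
  by rewrite bf_trmul' nsq_ge0.
have close d : 0 < d -> exists N, forall p, (N <= p)%N -> forall i j, `|L i j - Mp p i j| < d.
  move=> d0.
  have h : forall ij : 'I_m * 'I_m, \forall p \near \oo, `|L ij.1 ij.2 - Mp p ij.1 ij.2| < d.
    move=> [i j]; have := (cvgrPdist_lt _ _).1 (hA2lim i j) d d0.
    move=> /(_ eventually_filter) h; apply: filterS h => p /=.
    by rewrite /Mp [in X in _ -> X]mxE.
  have [N _ hN] := filter_forall eventually_filter h.
  by exists N => p Np i j; apply: (hN p Np (i, j)).
pose D : R := m%:R * m%:R.
have D0 : 0 < D by rewrite /D mulr_gt0 // ltr0n.
have Sbound p d : (forall i j, `|L i j - Mp p i j| < d) -> Sabs (L - Mp p) <= D * d.
  move=> h.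
  have : Sabs (L - Mp p) <= \sum_(i < m) \sum_(j < m) d.
    by apply: ler_sum => i _; apply: ler_sum => j _; rewrite mxBE; apply: ltW.
  by rewrite !sumr_const !card_ord /D -natrM mulr_natl mulrnA.
have bclose p d v : (forall i j, `|L i j - Mp p i j| < d) ->
    `|bf L v v - bf (Mp p) v v| <= D * d * nsq v.
  move=> h; rewrite -bfBM; apply: le_trans (bf_abs _ _) _.
  by rewrite ler_wpM2r ?nsq_ge0 // Sbound.
have Lsym : L^T = L.
  apply/matrixP => i j; rewrite mxE; apply/eqP; rewrite -subr_eq0 -normr_le0.
  suff : 0 <= - `|L j i - L i j| by lra.
  apply: (@ge0_eps _ _ 2) => // d d0.
  have [N hN] := close d d0.
  have h1 := hN N (leqnn N) j i; have h2 := hN N (leqnn N) i j.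
  have e : Mp N j i = Mp N i j by rewrite -{1}(Msym N) mxE.
  have : `|L j i - L i j| <= `|L j i - Mp N j i| + `|L i j - Mp N i j|.
    rewrite e (distrC (L i j)); apply: le_trans (ler_normD _ _).
    by rewrite addrA subrK.
  lra.
have Lpsd v : 0 <= bf L v v.
  apply: (@ge0_eps _ _ (D * nsq v)); first by rewrite mulr_ge0 ?nsq_ge0 // ltW.
  move=> d d0; have [N hN] := close d d0.
  have := bclose N d v (hN N (leqnn N)); have := Mpsd N v.
  rewrite ler_norml => h1 /andP [h2 h3]; lra.
have Lu : L \in unitmx by rewrite -row_free_unit /row_free hA2rank eqxx.
set c0 := inf (rayset L).
have eigc : eigenvalue L c0 := rayleigh_b Lsym hm.
have c0ge : 0 <= c0.
  apply: lb_le_inf; first exact: rayset_ne.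
  by move=> x [v _ <-]; apply: divr_ge0 (Lpsd v) (nsq_ge0 v).
have c0pos : 0 < c0.
  rewrite lt_neqAle c0ge andbT; apply/negP => /eqP e.
  by move: eigc; rewrite -e => /eig0_not_unit; rewrite Lu.
have dpos : 0 < c0 / (2 * D) by rewrite divr_gt0 // mulr_gt0.
have [N1 hN1] := close _ dpos.
have Mpd p : (N1 <= p)%N -> forall v, c0 / 2 * nsq v <= bf (Mp p) v v.
  move=> hp v; have := bclose p _ v (hN1 p hp); have := rayleigh_a L v.
  have -> : D * (c0 / (2 * D)) = c0 / 2 by field; rewrite gt_eqF.
  rewrite ler_norml => h1 /andP [h2 h3].
  have := nsq_ge0 v => h4.
  rewrite -/c0 in h1; lra.
exists ((K * nsq beta / (c0 / 2 * k) + 1) / 2), N1.+1 => p hp.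
have [sPsi _] := hPpd p.
apply: core => //.
- by rewrite divr_gt0.
- exact: leq_ltn_trans hp.
- by apply: eig_lower => // a /hA1 /andP [].
- by apply: eig_upper => // a /hA1 /andP [].
- by apply: Mpd; apply: ltnW.
Qed.
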